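(* Let $A$ be a subalgebra of a $K$-algebra $E$, $\Delta\subseteq\mathrm{Der}_A(E)$, and let $S$ be a regular left Ore set of $E$ with $S\subseteq N_\Delta(E)_0$. Then: (1) $A\subseteq E\subseteq S^{-1}E$, and each $\delta\in\Delta$ extends (via $\delta(s^{-1}e)=s^{-1}\delta(e)$) to an element of $\mathrm{Der}_A(S^{-1}E)$; thus $\Delta\subseteq\mathrm{Der}_A(S^{-1}E)$. (2) $S$ is a regular left Ore set of $N_\Delta(E)$. (3) $N_\Delta(S^{-1}E)=S^{-1}N_\Delta(E)$. (4) For all $i\geq0$, $N_\Delta(S^{-1}E)_i=S^{-1}N_\Delta(E)_i$.
   Context: $\mathrm{Der}_A(E)$ is the set of derivations of $E$ that are $A$-module homomorphisms. For $i\ge1$, $\Delta^i=\{\delta_1\cdots\delta_i\mid\delta_j\in\Delta\}$; for an algebra $B$ with $\Delta$ acting by derivations, $N_\Delta(B)_i=\{b\in B\mid\Delta^{i+1}b=0\}$ ($i\ge0$) and $N_\Delta(B)=\bigcup_iN_\Delta(B)_i$. A regular left Ore set is a multiplicative set of non-zero-divisors satisfying the left Ore condition; $S^{-1}E$ is the corresponding left localization, and $S^{-1}N_\Delta(E)_i=\{s^{-1}n\mid s\in S,n\in N_\Delta(E)_i\}$. *)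

(* Defs.v *)
From HB Require Import structures.
From mathcomp Require Import all_boot all_order all_algebra.
Set Implicit Arguments. Unset Strict Implicit. Unset Printing Implicit Defensive.
Import GRing.Theory.
Local Open Scope ring_scope.

Definition is_derA (R : pzRingType) (A : R -> Prop) (d : R -> R) : Prop :=
  [/\ forall x y, d (x + y) = d x + d y,
      forall x y, d (x * y) = d x * y + x * d y
    & forall a x, A a -> d (a * x) = a * d x].

(* Delta^n b = 0 : every product delta_1 ... delta_n of elements of Delta kills b. *)
Fixpoint killed (R : pzRingType) (Delta : (R -> R) -> Prop) (n : nat) (b : R)
    : Prop :=
  match n with
  | 0 => b = 0
  | n'.+1 => forall d, Delta d -> killed Delta n' (d b)
  end.

Definition N_i (R : pzRingType) (Delta : (R -> R) -> Prop) (i : nat) (b : R) :=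
  killed Delta i.+1 b.

Definition N_all (R : pzRingType) (Delta : (R -> R) -> Prop) (b : R) :=
  exists i, N_i Delta i b.

Definition regular_left_Ore_in (R : pzRingType) (B : R -> Prop) (S : R -> Prop)
    : Prop :=
  [/\ forall s, S s -> B s,
      S 1,
      forall s t, S s -> S t -> S (s * t),
      forall s x, S s -> B x -> (s * x = 0 -> x = 0) /\ (x * s = 0 -> x = 0)
    & forall s x, S s -> B x -> exists s' x', [/\ S s', B x' & s' * x = x' * s]].

Definition regular_left_Ore (R : pzRingType) (S : R -> Prop) :=
  regular_left_Ore_in (fun _ => True) S.

Definition is_left_localization (E : pzRingType) (Q : unitRingType)
    (S : E -> Prop) (iota : {rmorphism E -> Q}) : Prop :=
  [/\ forall s, S s -> iota s \is a GRing.unit,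
      forall q, exists s e, S s /\ q = (iota s)^-1 * iota e
    & forall e, iota e = 0 <-> exists s, S s /\ s * e = 0].

Definition ext_set (E : pzRingType) (Q : unitRingType) (S : E -> Prop)
    (iota : E -> Q) (Delta : (E -> E) -> Prop) : (Q -> Q) -> Prop :=
  fun d' => exists d, Delta d /\
    forall s e, S s -> d' ((iota s)^-1 * iota e) = (iota s)^-1 * iota (d e).

(* Main.v *)
Require Import Defs.
From HB Require Import structures.
From mathcomp Require Import all_boot all_order all_algebra.
From Stdlib Require Import ClassicalEpsilon.
Import GRing.Theory.
Local Open Scope ring_scope.

Theorem proposition2p5 (K : fieldType) (E : algType K) (A : {pred E})
    (Delta : (E -> E) -> Prop) (S : E -> Prop)
    (Q : unitRingType) (iota : {rmorphism E -> Q}) :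
  subalg_closed A ->
  (forall d, Delta d -> is_derA (fun a => a \in A) d) ->
  regular_left_Ore S ->
  (forall s, S s -> N_i Delta 0 s) ->
  is_left_localization S iota ->
  [/\ (* (1) *)
      injective iota /\
      (forall d, Delta d -> exists d' : Q -> Q,
          is_derA (fun q => exists2 a, a \in A & q = iota a) d' /\
          forall s e, S s -> d' ((iota s)^-1 * iota e) = (iota s)^-1 * iota (d e)),
      (* (2) *)
      regular_left_Ore_in (N_all Delta) S,
      (* (3) *)
      (forall q, N_all (ext_set S iota Delta) q <->
         exists s n, [/\ S s, N_all Delta n & q = (iota s)^-1 * iota n])
    & (* (4) *)
      (forall i q, N_i (ext_set S iota Delta) i q <->
         exists s n, [/\ S s, N_i Delta i n & q = (iota s)^-1 * iota n])].
Proof.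
move=> HA Hder [HSB HS1 HSM Hreg Hore] HN0 [Hunit Hsurj Hker].
have dS : forall d, Delta d -> forall s, S s -> d s = 0.
  by move=> d Hd s Hs; exact: (HN0 s Hs d Hd).
have regl : forall s x, S s -> x * s = 0 -> x = 0.
  by move=> s x Hs; exact: (Hreg s x Hs I).2.
have regr : forall s x, S s -> s * x = 0 -> x = 0.
  by move=> s x Hs; exact: (Hreg s x Hs I).1.
have inj : injective iota.
  move=> a b Hab; apply/eqP; rewrite -subr_eq0; apply/eqP.
  have : iota (a - b) = 0 by rewrite rmorphB Hab subrr.
  move/Hker => [s [Hs Hsab]]; exact: regr Hs Hsab.
have fr_expand : forall s u x a, S s -> S u -> x * s = u ->
    (iota s)^-1 * iota a = (iota u)^-1 * iota (x * a).
  move=> s u x a Hs Hu Hxs.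
  have Hx : iota x = iota u * (iota s)^-1 by rewrite -Hxs rmorphM mulrK // Hunit.
  by rewrite rmorphM Hx mulrA mulKr ?Hunit.
have swap : forall t t' a b, S t -> S t' -> t' * a = b * t ->
    iota a * (iota t)^-1 = (iota t')^-1 * iota b.
  move=> t t' a b Ht Ht' H; apply: (mulrI (Hunit _ Ht')).
  by rewrite mulrA -rmorphM H rmorphM mulrK ?Hunit // mulVKr ?Hunit.
have dzero : forall d, Delta d -> forall s t s'' x', S s -> S t -> S s'' ->
    s'' * t = x' * s -> d x' = 0.
  move=> d Hd s t s'' x' Hs Ht Hs'' Hx; have [dD dM dA] := Hder d Hd.
  apply: (regl s) => //.
  have := congr1 d Hx; rewrite !dM (dS d Hd s Hs) (dS _ Hd _ Ht) (dS _ Hd _ Hs'').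
  by rewrite !mul0r !mulr0 !addr0 => <-.
have wd : forall d, Delta d -> forall s e t f, S s -> S t ->
    (iota s)^-1 * iota e = (iota t)^-1 * iota f ->
    (iota s)^-1 * iota (d e) = (iota t)^-1 * iota (d f).
  move=> d Hd s e t f Hs Ht Heq; have [dD dM dA] := Hder d Hd.
  have [s'' [x' [Hs'' _ Hx]]] := Hore s t Hs I.
  have Hu : S (s'' * t) := HSM _ _ Hs'' Ht.
  have E1 := fr_expand s (s''*t) x' e Hs Hu (esym Hx).
  have E2 := fr_expand t (s''*t) s'' f Ht Hu erefl.
  have Hxe : x' * e = s'' * f.
    apply: inj; apply: (@mulrI _ (iota (s'' * t))^-1); first by rewrite unitrV Hunit.
    by rewrite -E1 -E2.
  have dx' := dzero d Hd s t s'' x' Hs Ht Hs'' Hx.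
  rewrite (fr_expand s (s''*t) x' (d e) Hs Hu (esym Hx)).
  rewrite (fr_expand t _ s'' (d f) Ht Hu erefl).
  have := congr1 d Hxe; rewrite !dM dx' (dS _ Hd _ Hs'') !mul0r !add0r => ->.
  done.
have rep : forall q, {p : E * E | S p.1 /\ q = (iota p.1)^-1 * iota p.2}.
  move=> q; apply: constructive_indefinite_description.
  have [s [e [Hs ->]]] := Hsurj q; by exists (s, e).
have ext : forall d, Delta d -> exists d' : Q -> Q,
          is_derA (fun q => exists2 a, a \in A & q = iota a) d' /\
          forall s e, S s -> d' ((iota s)^-1 * iota e) = (iota s)^-1 * iota (d e).
  move=> d Hd; have [dD dM dA] := Hder d Hd.
  pose d' q := (iota (sval (rep q)).1)^-1 * iota (d (sval (rep q)).2).
  have spec : forall s e, S s -> d' ((iota s)^-1 * iota e) = (iota s)^-1 * iota (d e).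
    move=> s e Hs; rewrite /d'; case: (rep _) => [[s0 e0] /= [Hs0 Heq]].
    exact: (wd d Hd s0 e0 s e Hs0 Hs (esym Heq)).
  have d1 : d 1 = 0.
    have h := dM 1 1; rewrite !mul1r mulr1 in h.
    by apply: (addrI (d 1)); rewrite addr0 -h.
  have dA0 : forall a, a \in A -> d a = 0.
    by move=> a Ha; rewrite -[a]mulr1 dA // d1 mulr0.
  have dD' : forall x y, d' (x + y) = d' x + d' y.
    move=> q1 q2.
    have [s [e [Hs ->]]] := Hsurj q1; have [t [f [Ht ->]]] := Hsurj q2.
    have [s'' [x' [Hs'' _ Hx]]] := Hore s t Hs I.
    have Hu : S (s'' * t) := HSM _ _ Hs'' Ht.
    have dx' := dzero d Hd s t s'' x' Hs Ht Hs'' Hx.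
    have -> : (iota s)^-1 * iota e + (iota t)^-1 * iota f
        = (iota (s'' * t))^-1 * iota (x' * e + s'' * f).
      by rewrite rmorphD mulrDr -(fr_expand s _ x' e Hs Hu (esym Hx))
         -(fr_expand t _ s'' f Ht Hu erefl).
    rewrite !spec //.
    rewrite (fr_expand s _ x' (d e) Hs Hu (esym Hx)) (fr_expand t _ s'' (d f) Ht Hu erefl).
    by rewrite -mulrDr -rmorphD dD !dM dx' (dS _ Hd _ Hs'') !mul0r !add0r.
  have dM' : forall x y, d' (x * y) = d' x * y + x * d' y.
    move=> q1 q2.
    have [s [e [Hs ->]]] := Hsurj q1; have [t [f [Ht ->]]] := Hsurj q2.
    have [t' [e' [Ht' _ Hte]]] := Hore t e Ht I.
    have Hts : S (t' * s) := HSM _ _ Ht' Hs.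
    have Hprod : forall a b c, t' * a = b * t ->
        (iota s)^-1 * iota a * ((iota t)^-1 * iota c)
        = (iota (t' * s))^-1 * iota (b * c).
      move=> a b c H.
      rewrite mulrA -(mulrA _ (iota a)) (swap t t' a b Ht Ht' H) !rmorphM.
      by rewrite invrM ?Hunit // !mulrA.
    rewrite (Hprod e e' f Hte) !spec //.
    have Hdte : t' * d e = d e' * t.
      have := congr1 d Hte; rewrite !dM (dS _ Hd _ Ht) (dS _ Hd _ Ht').
      by rewrite mul0r mulr0 add0r addr0.
    by rewrite dM rmorphD mulrDr (Hprod (d e) (d e') f Hdte) (Hprod e e' (d f) Hte).
  exists d'; split => //; split => //.
  move=> q x [a Ha ->]; rewrite dM'.
  have -> : d' (iota a) = 0.
    rewrite -[iota a]mul1r -invr1 -(rmorph1 iota) spec // dA0 // rmorph0 mulr0.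
    done.
  by rewrite mul0r add0r.
have KT : forall s s', S s -> S s' -> forall n y z,
    killed Delta n z -> y * s = s' * z -> killed Delta n y.
  move=> s s' Hs Hs'; elim=> [|n IH] y z /= Hz Hyz.
    by apply: (regl s) => //; rewrite Hyz Hz mulr0.
  move=> d Hd; apply: (IH _ (d z)); first exact: Hz d Hd.
  have [dD dM dA] := Hder d Hd.
  have := congr1 d Hyz; rewrite !dM (dS d Hd s Hs) (dS d Hd s' Hs').
  by rewrite mulr0 mul0r addr0 add0r.
have claim : forall m s e, S s ->
    killed (ext_set S iota Delta) m ((iota s)^-1 * iota e) <-> killed Delta m e.
  elim=> [|m IH] s e Hs /=.
    split.
      move=> H0; apply: inj; rewrite rmorph0.
      have : iota s * ((iota s)^-1 * iota e) = 0 by rewrite H0 mulr0.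
      by rewrite mulVKr ?Hunit.
    by move=> ->; rewrite rmorph0 mulr0.
  split.
    move=> H d Hd; have [d' [_ Hd']] := ext d Hd.
    apply/(IH s (d e) Hs); rewrite -Hd' //; apply: H; by exists d.
  move=> H d' [d [Hd Hd']]; rewrite Hd' //; apply/IH => //; exact: H.
have P4 : forall i q, N_i (ext_set S iota Delta) i q <->
         exists s n, [/\ S s, N_i Delta i n & q = (iota s)^-1 * iota n].
  move=> i q; split.
    move=> H; have [s [e [Hs Hq]]] := Hsurj q; exists s, e; split => //.
    by apply/(claim i.+1 s e Hs); rewrite -Hq.
  by move=> [s [n [Hs Hn ->]]]; exact/(claim i.+1 s n Hs).
split.
- split; first exact: inj.
  by move=> d Hd; exact: ext d Hd.
- split => //.
  + by move=> s Hs; exists 0%N; exact: HN0.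
  + by move=> s x Hs _; exact: Hreg s x Hs I.
  + move=> s x Hs [i Hi]; have [s' [x' [Hs' _ H]]] := Hore s x Hs I.
    exists s', x'; split => //; exists i.
    exact: (KT s s' Hs Hs' i.+1 x' x Hi (esym H)).
- move=> q; split.
    by move=> [i /P4 [s [n [Hs Hn Hq]]]]; exists s, n; split => //; exists i.
  by move=> [s [n [Hs [i Hi] Hq]]]; exists i; apply/P4; exists s, n.
- exact: P4.
Qed.
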